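(* The generating function $F(x)=\sum_{n\ge0}f(n)x^n$ satisfies $$F(x)=\frac{B(x)-x}{(1-x)^2},$$ where $B(x)=\sum_{n\ge0}b(n)x^n$, and also $$F(x)=\frac{(1+x)^2}{1-x}F(x^2)-\frac{x(1-2x^2)}{(1-x)^2(1-x^2)}.$$
   Context: A partition $n=p_1+\cdots+p_k$ with $1\le p_1\le\cdots\le p_k$ is non-squashing if $p_1+\cdots+p_j\le p_{j+1}$ for all $1\le j\le k-1$; $b(n)$ is the number of non-squashing partitions of $n$ into distinct parts ($b(0)=1$). $f(n)$ is the number of (possibly empty) sets of distinct integers $1\le p_1<p_2<\cdots<p_k\le n$ satisfying $p_1+\cdots+p_j\le p_{j+1}$ for $1\le j\le k-1$. *)

(* Defs.v *)
From mathcomp Require Import all_boot all_order all_algebra.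
Set Implicit Arguments. Unset Strict Implicit. Unset Printing Implicit Defensive.
Import Order.TTheory GRing.Theory Num.Theory.

(* The increasing list of parts encoded by S : {set 'I_n}; element i encodes
   the integer i+1, so S ranges over the subsets of {1,...,n}. *)
Definition parts_of (n : nat) (S : {set 'I_n}) : seq nat :=
  sort leq [seq (val i).+1 | i <- enum S].

(* p_1 + ... + p_j <= p_{j+1} for all 1 <= j <= k-1 (list is 0-indexed). *)
Definition nonsquashing (s : seq nat) : bool :=
  all (fun j => sumn (take j s) <= nth 0 s j) (iota 1 (size s).-1).

Definition f (n : nat) : nat :=
  #|[set S : {set 'I_n} | nonsquashing (parts_of S)]|.

(* A
   partition of n into distinct parts is a set of positive integers with sum n
   (all parts are then <= n); b(0) = 1 (empty partition). *)
Definition b (n : nat) : nat :=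
  #|[set S : {set 'I_n} | (sumn (parts_of S) == n) && nonsquashing (parts_of S)]|.

Local Open Scope ring_scope.

Definition fps := nat -> int.

Definition fps_add (a c : fps) : fps := fun n => a n + c n.
Definition fps_sub (a c : fps) : fps := fun n => a n - c n.
Definition fps_mul (a c : fps) : fps :=
  fun n => \sum_(i < n.+1) a i * c (n - i)%N.
Definition fps_const (r : int) : fps := fun n => if n == 0%N then r else 0.
Definition fps_X : fps := fun n => if n == 1%N then 1 else 0.
Definition fps_subst_x2 (a : fps) : fps :=
  fun n => if odd n then 0 else a n./2.
Definition fps_inv_1mx : fps := fun _ => 1.

Definition Fgf : fps := fun n => (f n)%:Z.
Definition Bgf : fps := fun n => (b n)%:Z.

Lemma inv_1mx_spec n :
  fps_mul (fps_sub (fps_const 1) fps_X) fps_inv_1mx n = fps_const 1 n.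
Proof.
rewrite /fps_mul /fps_sub /fps_const /fps_X /fps_inv_1mx.
case: n => [|n]; first by rewrite big_ord1.
rewrite big_ord_recl /= big_ord_recl /= big1 ?addr0 ?subr0 ?mulr1 ?subrr //.
Qed.

(* Main.v *)
Require Import Defs.
From mathcomp Require Import all_boot all_order all_algebra.
From mathcomp Require Import ring zify.
From Stdlib Require Import FunctionalExtensionality.
Import GRing.Theory.

Fixpoint subs (n : nat) : seq (seq nat) :=
  if n is k.+1 then subs k ++ [seq rcons s k.+1 | s <- subs k] else [:: [::]].

Lemma sorted_rcons_ltn t x :
  sorted ltn (rcons t x) = sorted ltn t && all (fun y => y < x) t.
Proof.
elim: t => [|y t IH] //=.
rewrite !(path_sortedE ltn_trans) IH all_rcons.
by case: (y < x); case: (all (ltn y) t); case: (sorted ltn t); case: (all _ t).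
Qed.

Lemma mem_subs n s : (s \in subs n) = sorted ltn s && all (fun x => 0 < x <= n) s.
Proof.
elim: n s => [|n IH] s.
  by case: s => [|x s] //=; rewrite inE /=; case: x => [|x] /=; rewrite ?andbF.
rewrite /= mem_cat IH.
case/lastP: s => [|t x]; first by [].
have -> : (rcons t x \in [seq rcons s n.+1 | s <- subs n]) = (x == n.+1) && (t \in subs n).
  apply/mapP/andP => [[u hu /rcons_inj [-> ->]] | [/eqP -> ht]]; first by split.
  by exists t.
rewrite IH sorted_rcons_ltn !all_rcons.
case: (sorted ltn t) => //=; rewrite ?andbF //.
case: eqP => [-> | nx].
  have -> : (0 < n.+1 <= n) = false by lia.
  rewrite /= andbF /= ltnSn /= -!all_predI; apply: eq_all => y /=; lia.
rewrite /= orbF.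
case: (ltngtP x n.+1) => hx; last by case: nx.
- have hx' : x <= n by lia.
  rewrite hx' !andbT.
  case: (0 < x); rewrite /= ?andbF //.
  rewrite -!all_predI; apply: eq_all => y /=; lia.
- have hx' : x <= n = false by lia.
  by rewrite hx' /= !andbF.
Qed.

Lemma subs_uniq n : uniq (subs n).
Proof.
elim: n => [|n IH] //=.
rewrite cat_uniq IH map_inj_uniq; last exact: rcons_injl.
rewrite IH andbT /=.
apply/hasPn => s /mapP [t _ ->]; rewrite mem_subs all_rcons /= ltnn /=.
by rewrite !andbF.
Qed.

Section Parts.
Variable n : nat.

Lemma parts_mem (S : {set 'I_n}) (i : 'I_n) : ((val i).+1 \in parts_of S) = (i \in S).
Proof.
rewrite /parts_of mem_sort (mem_map (f := fun i : 'I_n => (val i).+1)) ?mem_enum //.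
by move=> a c /= [] /val_inj.
Qed.

Lemma parts_sorted (S : {set 'I_n}) : sorted ltn (parts_of S).
Proof.
rewrite ltn_sorted_uniq_leq sort_uniq sort_sorted ?andbT; last exact: leq_total.
rewrite map_inj_uniq ?enum_uniq //.
by move=> a c /= [] /val_inj.
Qed.

Lemma parts_all (S : {set 'I_n}) : all (fun x => 0 < x <= n) (parts_of S).
Proof.
apply/allP => x; rewrite mem_sort => /mapP [i _ ->] /=; exact: ltn_ord.
Qed.

Lemma parts_inj : injective (@parts_of n).
Proof. by move=> S T h; apply/setP => i; rewrite -!parts_mem h. Qed.

Lemma parts_surj s : sorted ltn s -> all (fun x => 0 < x <= n) s ->
  parts_of [set i : 'I_n | (val i).+1 \in s] = s.
Proof.
move=> ss sa; apply: (irr_sorted_eq ltn_trans ltnn) => //; first exact: parts_sorted.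
move=> x; apply/idP/idP.
  by rewrite mem_sort => /mapP [i]; rewrite mem_enum inE => hi ->.
move=> xs; have := allP sa x xs; case: x xs => [|k] xs //= hk.
by rewrite (parts_mem _ (Ordinal hk)) inE.
Qed.

Lemma card_count (P : pred (seq nat)) :
  #|[set S : {set 'I_n} | P (parts_of S)]| = count P (subs n).
Proof.
rewrite cardsE cardE /enum_mem -enumT size_filter.
rewrite -(count_map (@parts_of n) P).
apply/permP/uniq_perm; first by rewrite map_inj_uniq ?enum_uniq //; exact: parts_inj.
  exact: subs_uniq.
move=> s; rewrite mem_subs; apply/mapP/andP => [[S _ ->] | [h1 h2]].
  by rewrite parts_sorted parts_all.
by exists [set i : 'I_n | (val i).+1 \in s]; rewrite ?mem_enum // parts_surj.
Qed.
End Parts.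

Lemma ns_rcons s m : nonsquashing (rcons s m) = nonsquashing s && (sumn s <= m).
Proof.
case: s => [|x s]; first by [].
rewrite /nonsquashing size_rcons.
have -> : (size (x :: s)).+1.-1 = (size s).+1 by [].
have -> : (size (x :: s)).-1 = size s by [].
have -> : iota 1 (size s).+1 = iota 1 (size s) ++ [:: (size s).+1].
  by have := iotaD 1 (size s) 1; rewrite addn1 add1n.
rewrite all_cat /= andbT.
congr (_ && _).
  apply: eq_in_all => j; rewrite mem_iota => /andP [h1 h2].
  rewrite -rcons_cons -cats1 takel_cat; last by rewrite /=; lia.
  rewrite nth_cat; have -> : (j < size (x :: s)) = true by rewrite /=; lia.
  by [].
by rewrite -cats1 take_size_cat // nth_cat ltnn subnn.
Qed.

Lemma count_subsS n (P : pred (seq nat)) :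
  count P (subs n.+1) = count P (subs n) + count (fun s => P (rcons s n.+1)) (subs n).
Proof. by rewrite /= count_cat count_map. Qed.

Lemma le_sumn x s : x \in s -> x <= sumn s.
Proof.
elim: s => [|y s IH] //=; rewrite inE => /orP [/eqP -> | h]; first exact: leq_addr.
by rewrite (leq_trans (IH h)) ?leq_addl.
Qed.

Lemma widen m n (P : pred (seq nat)) : m <= n ->
  (forall s, P s -> all (fun x => x <= m) s) -> count P (subs n) = count P (subs m).
Proof.
move=> hmn hP; elim: n hmn => [|n IH] hmn; first by have -> : m = 0 by lia.
case: (ltngtP m n.+1) => h; last by rewrite h.
  rewrite count_subsS IH; last by lia.
  have -> : count (fun s => P (rcons s n.+1)) (subs n) = 0; last by rewrite addn0.
  apply/eqP; rewrite -leqn0 leqNgt -has_count; apply/hasPn => s _ /=.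
  apply/negP => /hP; rewrite all_rcons => /andP [] /=; lia.
lia.
Qed.

Lemma bE k n : k <= n -> count (fun s => (sumn s == k) && nonsquashing s) (subs n) = b k.
Proof.
move=> hk; rewrite /b (card_count k (fun s => (sumn s == k) && nonsquashing s)).
apply: widen => // s /andP [/eqP hs _]; apply/allP => x /le_sumn; lia.
Qed.

Lemma fE n : f n = count nonsquashing (subs n).
Proof. exact: (card_count n nonsquashing). Qed.

Lemma b0 : b 0 = 1.
Proof. by rewrite -(@bE 0 0 (leqnn 0)). Qed.

Lemma count_le_split (l : seq (seq nat)) (h : seq nat -> nat) (a : pred (seq nat)) t :
  count (fun s => a s && (h s <= t)) l = \sum_(k < t.+1) count (fun s => (h s == k) && a s) l.
Proof.
elim: t => [|t IH].
  rewrite big_ord1; apply: eq_count => s /=; lia.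
rewrite big_ord_recr /= -IH; clear IH.
elim: l => [|s l IHl] //=; rewrite IHl; lia.
Qed.

Lemma Xlem m :
  count (fun s => (sumn s == m.+1) && nonsquashing s) (subs m) + 1 = b m.+1.
Proof.
rewrite -(@bE m.+1 m.+1 (leqnn m.+1)) count_subsS; congr (_ + _).
rewrite (@eq_count _ _ (fun s => (sumn s == 0) && nonsquashing s)); last first.
  move=> s /=; rewrite sumn_rcons ns_rcons.
  by case: (nonsquashing s); lia.
rewrite (@widen 0 m) //.
move=> s /andP [/eqP hs _]; apply/allP => x /le_sumn; lia.
Qed.

Lemma fS n : (f n.+1 + 1 = f n + \sum_(k < n.+2) b k)%N.
Proof.
rewrite !fE count_subsS.
have -> : count (fun s => nonsquashing (rcons s n.+1)) (subs n) =
          count (fun s => nonsquashing s && (sumn s <= n.+1)) (subs n).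
  by apply: eq_count => s /=; rewrite ns_rcons.
rewrite count_le_split big_ord_recr /= -!addnA Xlem.
rewrite [in RHS]big_ord_recr /=; congr (_ + (_ + _)); apply: eq_bigr => i _; apply: bE; have := ltn_ord i; lia.
Qed.

Lemma count_last n (P : pred (seq nat)) :
  count P (subs n) = P [::] + \sum_(m < n) count (fun s => P (rcons s m.+1)) (subs m).
Proof.
elim: n => [|n IH]; first by rewrite big_ord0 /= !addn0.
by rewrite count_subsS IH big_ord_recr /= addnA.
Qed.

Lemma Tval n k : k < n ->
  count (fun s => (sumn (rcons s (n - k.+1).+1) == n) &&
                  nonsquashing (rcons s (n - k.+1).+1)) (subs (n - k.+1))
  + (k.*2 == n) = if k.*2 <= n then b k else 0.
Proof.
move=> hk.
rewrite (@eq_count _ _ (fun s => ((sumn s == k) && nonsquashing s) && (k.*2 <= n))); last first.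
  move=> s /=; rewrite sumn_rcons ns_rcons; case: (nonsquashing s); lia.
case: (ltngtP (k.*2) n) => h.
- rewrite (@eq_count _ _ (fun s => (sumn s == k) && nonsquashing s)); last first.
    by move=> s /=; rewrite andbT.
  rewrite bE ?addn0 //; lia.
- rewrite (@eq_count _ _ pred0) ?count_pred0 //.
  by move=> s /=; rewrite andbF.
- rewrite (@eq_count _ _ (fun s => (sumn s == k) && nonsquashing s)); last first.
    by move=> s /=; rewrite andbT.
  have -> : n - k.+1 = k.-1 by lia.
  case: k hk h => [|j] hk h; first by lia.
  exact: Xlem.
Qed.

Lemma bS n : 0 < n -> b n + ~~ odd n = \sum_(k < n./2.+1) b k.
Proof.
move=> hn.
have := count_last n (fun s => (sumn s == n) && nonsquashing s).
rewrite (@bE n n (leqnn n)) /=.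
have -> : (0 == n) = false by lia.
rewrite add0n => ->.

rewrite -(big_mkord xpredT (fun m : nat => count (fun s => (sumn (rcons s m.+1) == n) && nonsquashing (rcons s m.+1)) (subs m))).
rewrite big_rev_mkord subn0.
have -> : ((~~ odd n) : nat) = \sum_(k < n) (k.*2 == n).
  case ho: (odd n).
    by rewrite big1 // => k _; lia.
  have hp : n./2 < n by lia.
  rewrite (bigD1 (Ordinal hp)) //= big1 ?addn0.
    lia.
  move=> k hk; case e: (k.*2 == n) => //=; exfalso.
  move/eqP: hk; apply; apply: val_inj => /=; lia.
rewrite -big_split /=.
rewrite (eq_bigr (fun k : 'I_n => if k.*2 <= n then b k else 0)); last first.
  move=> k _; apply: Tval; exact: ltn_ord.
rewrite (@big_ord_widen _ _ _ _ n); last by lia.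
rewrite [in RHS]big_mkcond /=; apply: eq_bigr => k _.
have -> : (k.*2 <= n) = (k < n./2.+1) by lia.
by [].
Qed.

Local Open Scope ring_scope.

Definition sh (a : fps) : fps := fun n => if n is k.+1 then a k else 0.
Definition D (a : fps) : fps := fps_sub a (sh a).
Definition tp (n : nat) (a : fps) : {poly int} := \poly_(i < n.+1) a i.

Lemma fps_mul_poly n a c (p q : {poly int}) :
  (forall i, (i <= n)%N -> p`_i = a i) -> (forall i, (i <= n)%N -> q`_i = c i) ->
  fps_mul a c n = (p * q)`_n.
Proof.
move=> pa qc; rewrite coefM /fps_mul; apply: eq_bigr => i _.
rewrite pa ?qc ?leq_subr //; exact: (ltn_ord i).
Qed.

Lemma tpE n a i : (i <= n)%N -> (tp n a)`_i = a i.
Proof. by move=> h; rewrite coef_poly ltnS h. Qed.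

Lemma fmulC a c : fps_mul a c = fps_mul c a.
Proof.
apply: functional_extensionality => n.
by rewrite !(@fps_mul_poly n _ _ (tp n _) (tp n _) (tpE n _) (tpE n _)) mulrC.
Qed.

Lemma fmulA a c d : fps_mul (fps_mul a c) d = fps_mul a (fps_mul c d).
Proof.
apply: functional_extensionality => n.
rewrite (@fps_mul_poly n _ _ (tp n a * tp n c) (tp n d)); last exact: tpE.
  rewrite (@fps_mul_poly n _ _ (tp n a) (tp n c * tp n d)) ?mulrA //; first exact: tpE.
  move=> i hi; apply/esym/fps_mul_poly => j hj; apply: tpE; exact: leq_trans hj hi.
move=> i hi; apply/esym/fps_mul_poly => j hj; apply: tpE; exact: leq_trans hj hi.
Qed.

Lemma fmulDl a c d : fps_mul (fps_add a c) d = fps_add (fps_mul a d) (fps_mul c d).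
Proof.
apply: functional_extensionality => n.
by rewrite /fps_mul /fps_add -big_split; apply: eq_bigr => i _; rewrite mulrDl.
Qed.

Lemma fmulBl a c d : fps_mul (fps_sub a c) d = fps_sub (fps_mul a d) (fps_mul c d).
Proof.
apply: functional_extensionality => n.
by rewrite /fps_mul /fps_sub -sumrB; apply: eq_bigr => i _; rewrite mulrBl.
Qed.

Lemma fmulX a : fps_mul fps_X a = sh a.
Proof.
apply: functional_extensionality => -[|n]; first by rewrite /fps_mul big_ord1 /fps_X /= mul0r.
rewrite /fps_mul big_ord_recl big_ord_recl /fps_X /= big1 ?mul0r ?add0r ?addr0 ?mul1r ?subn1 //.
by move=> i _; rewrite mul0r.
Qed.

Lemma fmulK c a : fps_mul (fps_const c) a = fun n => c * a n.
Proof.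
apply: functional_extensionality => n.
by rewrite /fps_mul big_ord_recl /fps_const /= subn0 big1 ?addr0 // => i _; rewrite mul0r.
Qed.

Lemma mulinvE a n : fps_mul a fps_inv_1mx n = \sum_(i < n.+1) a i.
Proof. by apply: eq_bigr => i _; rewrite /fps_inv_1mx mulr1. Qed.

Lemma D_inv a : D (fps_mul a fps_inv_1mx) = a.
Proof.
apply: functional_extensionality => -[|n]; rewrite /D /fps_sub /sh !mulinvE.
  by rewrite big_ord1 subr0.
by rewrite big_ord_recr /= addrC addrK.
Qed.

Lemma D_E a : D a = fps_mul (fps_sub (fps_const 1) fps_X) a.
Proof.
rewrite fmulBl fmulK fmulX; apply: functional_extensionality => n.
by rewrite /D /fps_sub mul1r.
Qed.

Lemma D_mul a c : D (fps_mul a c) = fps_mul (D a) c.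
Proof. by rewrite !D_E fmulA. Qed.

Lemma D_sub a c : D (fps_sub a c) = fps_sub (D a) (D c).
Proof.
apply: functional_extensionality => -[|n]; rewrite /D /fps_sub /sh; ring.
Qed.

Lemma D_inj a c : (forall n, D a n = D c n) -> forall n, a n = c n.
Proof.
move=> h; elim=> [|n IH]; first by have := h 0%N; rewrite /D /fps_sub /sh !subr0.
have := h n.+1; rewrite /D /fps_sub /sh IH => /eqP; rewrite (can_eq (subrK _)).
by move/eqP.
Qed.

Lemma f0 : f 0 = 1%N.
Proof. by rewrite fE. Qed.

Lemma b1 : b 1 = 1%N.
Proof. have := @bS 1 (ltn0Sn 0); rewrite big_ord1 b0 /=; lia. Qed.

Lemma DF_E n : D Fgf n = (\sum_(k < n.+1) b k)%N%:Z - (0 < n)%N%:Z.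
Proof.
case: n => [|n]; first by rewrite /D /fps_sub /sh /Fgf big_ord1 f0 b0.
rewrite /D /fps_sub /sh /Fgf /=.
have := fS n; set S := (\sum_(k < n.+2) b k)%N. lia.
Qed.

Lemma DDF_E n : D (D Fgf) n = Bgf n - fps_X n.
Proof.
case: n => [|n].
  by rewrite {1}/D /fps_sub /sh DF_E big_ord1 /Bgf /fps_X b0.
rewrite {1}/D /fps_sub /sh !DF_E big_ord_recr /= /Bgf /fps_X.
case: n => [|n] /=; lia.
Qed.

Lemma mul1 a : fps_mul (fps_const 1) a = a.
Proof. rewrite fmulK; apply: functional_extensionality => n; exact: mul1r. Qed.

Lemma D1X : D (fps_add (fps_const 1) fps_X) = fps_sub (fps_const 1) (fps_mul fps_X fps_X).
Proof.
rewrite fmulX; apply: functional_extensionality => n.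
rewrite /D /fps_sub /fps_add /sh /fps_const /fps_X.
by case: n => [|[|[|n]]] /=; rewrite ?subr0 ?addr0 ?add0r ?subrr ?sub0r.
Qed.

Lemma Fgf_D :
  forall n : nat,
     Fgf n = fps_mul (fps_mul (fps_sub Bgf fps_X) fps_inv_1mx) fps_inv_1mx n.
Proof.
apply: D_inj => n; rewrite D_inv; move: n; apply: D_inj => n.
by rewrite D_inv DDF_E.
Qed.

Definition Qp := fps_mul (fps_add (fps_const 1) fps_X) (fps_add (fps_const 1) fps_X).
Definition Wp := fps_mul fps_X (fps_sub (fps_const 1) (fps_mul (fps_const 2) (fps_mul fps_X fps_X))).
Definition F2 := fps_subst_x2 Fgf.
Definition I2 := fps_subst_x2 fps_inv_1mx.
Definition R2 := fps_sub (fps_mul (fps_mul Qp fps_inv_1mx) F2)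
                   (fps_mul (fps_mul (fps_mul Wp fps_inv_1mx) fps_inv_1mx) I2).
Definition Y := fps_add F2 (sh F2).

Lemma DDR : D (D R2) = fps_sub (fps_sub Y (sh (sh Y)))
                           (sh (fps_sub I2 (fun n => 2 * sh (sh I2) n))).
Proof.
have h1 : fps_mul (fps_mul Qp fps_inv_1mx) F2 = fps_mul (fps_mul Qp F2) fps_inv_1mx.
  by rewrite fmulA (fmulC fps_inv_1mx F2) -fmulA.
have h2 : fps_mul (fps_mul (fps_mul Wp fps_inv_1mx) fps_inv_1mx) I2 =
          fps_mul (fps_mul (fps_mul Wp I2) fps_inv_1mx) fps_inv_1mx.
  rewrite fmulA fmulA (fmulC fps_inv_1mx I2) -(fmulA fps_inv_1mx I2).
  by rewrite (fmulC fps_inv_1mx I2) -fmulA -fmulA.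
have e1 : D R2 = fps_sub (fps_mul Qp F2) (fps_mul (fps_mul Wp I2) fps_inv_1mx).
  by rewrite /R2 h1 h2 (D_sub (fps_mul (fps_mul Qp F2) fps_inv_1mx) _) !D_inv.
rewrite e1 (D_sub (fps_mul Qp F2) _) D_inv (D_mul Qp F2).
rewrite /Qp (D_mul (fps_add (fps_const 1) fps_X) (fps_add (fps_const 1) fps_X)) D1X.
have eY : fps_mul (fps_add (fps_const 1) fps_X) F2 = Y.
  by rewrite fmulDl mul1 fmulX.
have eXX : forall a, fps_mul (fps_mul fps_X fps_X) a = sh (sh a).
  by move=> a; rewrite fmulA !fmulX.
rewrite fmulA eY fmulBl mul1 eXX.
rewrite /Wp fmulA fmulX fmulBl mul1 fmulA fmulK eXX.
by [].
Qed.

Lemma F2o m : odd m -> F2 m = 0.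
Proof. by rewrite /F2 /fps_subst_x2 => ->. Qed.
Lemma F2e m : ~~ odd m -> F2 m = (f m./2)%:Z.
Proof. by rewrite /F2 /fps_subst_x2 => /negbTE ->. Qed.
Lemma I2o m : odd m -> I2 m = 0.
Proof. by rewrite /I2 /fps_subst_x2 => ->. Qed.
Lemma I2e m : ~~ odd m -> I2 m = 1.
Proof. by rewrite /I2 /fps_subst_x2 => /negbTE ->. Qed.
Lemma shS a m : sh a m.+1 = a m. Proof. by []. Qed.
Lemma sh0 a : sh a 0 = 0. Proof. by []. Qed.
Lemma X1 : fps_X 1 = 1. Proof. by []. Qed.
Lemma Xn m : m != 1%N -> fps_X m = 0.
Proof. by rewrite /fps_X => /negbTE ->. Qed.

Lemma final n : D (D Fgf) n = D (D R2) n.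
Proof.
rewrite DDF_E DDR /fps_sub /Y /fps_add /Bgf.
case: n => [|[|[|k]]]; rewrite ?shS ?sh0.
- rewrite Xn // (@F2e 0) // b0 f0; lia.
- rewrite X1 (@F2o 1) // (@F2e 0) // (@I2e 0) // b1 f0; lia.
- rewrite Xn // (@F2e 2) // (@F2o 1) // (@F2e 0) // (@I2o 1) //.
  have := @bS 2 isT; have := fS 0; rewrite !big_ord_recr big_ord0 /= b0 b1 f0.
  lia.
rewrite Xn //.
move: (odd_double_half k); move: (odd k) (k./2) => [] q hk.
- rewrite (@F2e k.+3); last by lia.
  rewrite (@F2o k.+2); last by lia.
  rewrite (@F2e k.+1); last by lia.
  rewrite (@F2o k); last by lia.
  rewrite (@I2o k.+2); last by lia.
  rewrite (@I2o k); last by lia.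
  have e3 : (k.+3./2 = q.+2)%N by lia.
  have e1 : (k.+1./2 = q.+1)%N by lia.
  rewrite e3 e1.
  have := @bS k.+3 isT; rewrite e3; have := fS q.+1.
  lia.
- rewrite (@F2o k.+3); last by lia.
  rewrite (@F2e k.+2); last by lia.
  rewrite (@F2o k.+1); last by lia.
  rewrite (@F2e k); last by lia.
  rewrite (@I2e k.+2); last by lia.
  rewrite (@I2e k); last by lia.
  have e3 : (k.+3./2 = q.+1)%N by lia.
  have e2 : (k.+2./2 = q.+1)%N by lia.
  have e0 : (k./2 = q)%N by lia.
  rewrite e2 e0.
  have := @bS k.+3 isT; rewrite e3; have := fS q.
  lia.
Qed.

Theorem corollary7 :
  (forall n : nat,
     Fgf n = fps_mul (fps_mul (fps_sub Bgf fps_X) fps_inv_1mx) fps_inv_1mx n) /\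
  (forall n : nat,
     Fgf n =
       fps_sub
         (fps_mul
            (fps_mul (fps_mul (fps_add (fps_const 1) fps_X)
                              (fps_add (fps_const 1) fps_X))
                     fps_inv_1mx)
            (fps_subst_x2 Fgf))
         (fps_mul
            (fps_mul
               (fps_mul
                  (fps_mul fps_X
                     (fps_sub (fps_const 1)
                        (fps_mul (fps_const 2) (fps_mul fps_X fps_X))))
                  fps_inv_1mx)
               fps_inv_1mx)
            (fps_subst_x2 fps_inv_1mx)) n).
Proof.
split; first exact: Fgf_D.
have H : forall n, Fgf n = R2 n.
  apply: D_inj; apply: D_inj => n; exact: final.
exact: H.
Qed.
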